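(* Let $T$ be a string of length $n$ over an alphabet $\Sigma$, and let $1\le i\le j<n$. Let $d=j-i+1$ and let $\sigma'$ be the number of distinct characters occurring in $T[i..j]$. Then $|\mathsf{MAW}(T[i..j+1])\setminus\mathsf{MAW}(T[i..j])|\le\sigma'+d$.
   Context: For a string $S$ over alphabet $\Sigma$, a string $w\in\Sigma^*$ is a minimal absent word (MAW) of $S$ if $w$ does not occur in $S$ but every proper substring of $w$ (including the empty string) occurs in $S$; $\mathsf{MAW}(S)$ is the set of all MAWs of $S$. $T[a..b]$ denotes the substring of $T$ from position $a$ to $b$. *)

(* Defs.v *)
From mathcomp Require Import all_boot.
Set Implicit Arguments. Unset Strict Implicit. Unset Printing Implicit Defensive.

Section MAW.
Variable Sigma : eqType.

(* w occurs in S (as a contiguous substring); the empty string occurs everywhere. *)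
Definition occurs (w S : seq Sigma) : bool := infix w S.

Definition is_MAW (S w : seq Sigma) : Prop :=
  ~~ occurs w S /\ (forall u : seq Sigma, infix u w -> u <> w -> occurs u S).

(* T[a..b], 1-indexed, inclusive *)
Definition substr (T : seq Sigma) (a b : nat) : seq Sigma :=
  take (b.+1 - a) (drop a.-1 T).

Definition num_distinct (S : seq Sigma) : nat := size (undup S).
End MAW.

(* Main.v *)
Require Import Defs.
From mathcomp Require Import all_boot.
From mathcomp Require Import zify.
Set Implicit Arguments. Unset Strict Implicit. Unset Printing Implicit Defensive.

Section Aux.
Variable Sigma : eqType.
Implicit Types (u w x z s : seq Sigma) (a b c : Sigma).

Lemma suffix_consE u a s : suffix u (a :: s) -> u = a :: s \/ suffix u s.
Proof.
move/suffixP=> [[|y s2'] /= E]; first by left.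
by case: E => _ ->; right; apply: suffix_suffix.
Qed.

Lemma pinfix a x b u : infix u (a :: rcons x b) -> u <> a :: rcons x b ->
  infix u (rcons x b) || infix u (a :: x).
Proof.
rewrite -rcons_cons infix_rconsl => /orP[|->]; last by rewrite orbT.
rewrite rcons_cons => /suffix_consE [->//|/suffixW ->//].
Qed.

Lemma suffix_le u1 u2 z : suffix u1 z -> suffix u2 z -> size u1 <= size u2 ->
  suffix u1 u2.
Proof.
move=> S1 S2 le; rewrite !suffixE in S1 S2; move: S1 S2 => /eqP E1 /eqP E2.
have hz : size u2 <= size z by rewrite -E2 size_drop leq_subr.
have -> : u1 = drop (size u2 - size u1) u2.
  rewrite -{2}E2 drop_drop -{1}E1; congr drop.
  lia.
exact: suffix_drop.
Qed.
End Aux.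

Section Main.
Variable Sigma : eqType.
Variables (S : seq Sigma) (c : Sigma).
Hypothesis S0 : 0 < size S.
Let S' := rcons S c.

Definition P (w : seq Sigma) := is_MAW S' w /\ ~ is_MAW S w.

Lemma shapeP (w : seq Sigma) : P w -> exists a x b, w = a :: rcons x b.
Proof.
case=> [[H1 H2] H3].
case: w H1 H2 H3 => [|a w]; first by rewrite /occurs infix0s.
case/lastP: w => [|x b] H1 H2 H3; last by exists a, x, b.
exfalso; apply: H3; split.
  apply: contra H1; rewrite /occurs /S' => H; rewrite infix_rconsl H orbT //.
move=> u; rewrite infixs1 => /orP[/eqP -> _|/eqP -> //]; exact: infix0s.
Qed.

Lemma inS_S' (u : seq Sigma) : infix u S -> infix u S'.
Proof. by move=> H; rewrite /S' infix_rconsl H orbT. Qed.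

Lemma keyP (a : Sigma) x b : P (a :: rcons x b) ->
  [/\ ~~ infix (a :: rcons x b) S', infix (rcons x b) S', infix (a :: x) S'
    & ~~ (infix (rcons x b) S && infix (a :: x) S)].
Proof.
case=> [[H1 H2] H3]; split => //.
- apply: H2; first exact: suffixW (suffix_cons _ _).
  by move=> /(f_equal size) /=; rewrite size_rcons; lia.
- apply: H2; first by rewrite -rcons_cons infix_rcons.
  by move=> /(f_equal size) /=; rewrite size_rcons; lia.
apply/negP => /andP[Hr Hl]; apply: H3; split.
  by apply: contra H1 => /inS_S'.
move=> u Hu Hne; have /orP[] := pinfix Hu Hne => Hu'.
  exact: infix_trans Hu' Hr.
exact: infix_trans Hu' Hl.
Qed.

Definition f (w : seq Sigma) : (nat + Sigma)%type :=
  if infix (behead w) S then inr (last c w)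
  else inl (infix_index (take (size w).-1 w) S' + (size w).-1).

Lemma take_shape (a : Sigma) x b : take (size (a :: rcons x b)).-1 (a :: rcons x b) = a :: x.
Proof.
by rewrite /= size_rcons /= -cats1 take_size_cat.
Qed.

Lemma f_shape (a : Sigma) x b : f (a :: rcons x b) =
  if infix (rcons x b) S then inr b
  else inl (infix_index (a :: x) S' + (size x).+1).
Proof.
rewrite /f take_shape /= last_rcons size_rcons //.
Qed.


Lemma caseA (a : Sigma) x b : P (a :: rcons x b) -> ~~ infix (rcons x b) S ->
  b = c /\ (let e := infix_index (a :: x) S' + (size x).+1 in
   [/\ 0 < e, e <= (size S).+1, e != size S & suffix (a :: x) (take e S')]).
Proof.
move=> HP Hn; have [H1 Hr Hl _] := keyP HP.
have Hs : suffix (rcons x b) S'.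
  by move: Hr; rewrite /S' infix_rconsl (negbTE Hn) orbF.
move: Hs; rewrite /S' suffix_rcons => /andP[/eqP Eb _]; split => //.
subst b.
set q := infix_index (a :: x) S'.
have Et : take (size x).+1 (drop q S') = a :: x by move: Hl; rewrite infixE => /eqP.
have Hsz : (size x).+1 <= size S' - q.
  by have := f_equal size Et; rewrite size_take size_drop /=; case: ltnP => h E; lia.
have HS' : size S' = (size S).+1 by rewrite /S' size_rcons.
split => //=.
- by rewrite addnS.
- by rewrite -HS'; lia.
- apply/negP => /eqP Hq.
  have Hd : drop q S' = rcons (drop q S) c by rewrite /S' drop_rcons //; lia.
  have Hsd : size (drop q S) = (size x).+1 by rewrite size_drop; lia.
  move: Et; rewrite Hd -cats1 take_size_cat // => Ed.
  move/negP: H1; apply; apply/infixP; exists (take q S'), [::].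
  by rewrite cats0 -{1}(cat_take_drop q S') Hd Ed.
- by rewrite takeD Et; apply: suffix_suffix.
Qed.

Lemma caseB (a : Sigma) x b : P (a :: rcons x b) -> infix (rcons x b) S ->
  b \in S /\ suffix (a :: x) S'.
Proof.
move=> HP Hr; have [_ _ Hl H4] := keyP HP.
split.
  by apply: (mem_infix Hr); rewrite mem_rcons mem_head.
move: H4; rewrite Hr /= => Hn.
by move: Hl; rewrite /S' infix_rconsl (negbTE Hn) orbF.
Qed.

Lemma same_end (a1 a2 : Sigma) x1 x2 b z :
  P (a1 :: rcons x1 b) -> P (a2 :: rcons x2 b) ->
  suffix (a1 :: x1) z -> suffix (a2 :: x2) z ->
  a1 :: rcons x1 b = a2 :: rcons x2 b.
Proof.
wlog le : a1 a2 x1 x2 / size x1 <= size x2.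
  move=> W P1 P2 s1 s2; case: (leqP (size x1) (size x2)) => h.
    exact: W.
  by symmetry; apply: W => //; apply: ltnW.
move=> P1 P2 s1 s2.
have sf : suffix (a1 :: x1) (a2 :: x2) by apply: (suffix_le s1 s2) => /=.
have sf2 : suffix (a1 :: rcons x1 b) (a2 :: rcons x2 b).
  by rewrite -!rcons_cons suffix_rcons eqxx.
apply/eqP; apply/negPn/negP => /eqP Hne.
have [_ H2] := P2.1.
have [H1 _ _ _] := keyP P1.
by move/negP: H1; apply; apply: H2 => //; apply: suffixW.
Qed.


Lemma count_main (ws : seq (seq Sigma)) : uniq ws -> (forall w, w \in ws -> P w) ->
  size ws <= size (undup S) + size S.
Proof.
move=> U HP.
have inj : {in ws &, injective f}.
  move=> w1 w2 /HP P1 /HP P2.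
  have [a1 [x1 [b1 E1]]] := shapeP P1; have [a2 [x2 [b2 E2]]] := shapeP P2.
  subst w1 w2; rewrite !f_shape.
  case: (boolP (infix (rcons x1 b1) S)) => h1;
  case: (boolP (infix (rcons x2 b2) S)) => h2 //= E.
  - case: E => Eb; subst b2.
    have [_ s1] := caseB P1 h1; have [_ s2] := caseB P2 h2.
    exact: same_end P1 P2 s1 s2.
  - case: E => Ee.
    have [Eb1 [_ _ _ s1]] := caseA P1 h1; have [Eb2 [_ _ _ s2]] := caseA P2 h2.
    subst b1 b2; rewrite Ee in s1.
    exact: same_end P1 P2 s1 s2.
rewrite -(map_inj_in_uniq inj) in U.
set Cod := map inl (rcons (iota 1 (size S).-1) (size S).+1) ++ map inr (undup S).
have -> : size (undup S) + size S = size Cod.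
  rewrite /Cod size_cat !size_map size_rcons size_iota; lia.
rewrite -(size_map f ws); apply: uniq_leq_size => // y /mapP [w /HP Pw ->].
have [a [x [b E]]] := shapeP Pw; subst w.
rewrite f_shape /Cod mem_cat; case: (boolP (infix (rcons x b) S)) => h.
  have [hb _] := caseB Pw h.
  by apply/orP; right; apply/mapP; exists b; rewrite ?mem_undup.
have [_ [e0 e1 e2 _]] := caseA Pw h.
apply/orP; left; apply/mapP; eexists; last reflexivity.
rewrite mem_rcons in_cons mem_iota; move: e0 e1 e2.
set e := (_ + _); move=> e0 e1 /eqP e2; apply/orP.
case: (ltnP e (size S)) => h3; [right|left]; apply/andP || apply/eqP; lia.
Qed.

End Main.

Theorem lemma11 (Sigma : eqType) (T : seq Sigma) (i j : nat) :
  1 <= i -> i <= j -> j < size T ->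
  forall ws : seq (seq Sigma), uniq ws ->
  (forall w, w \in ws ->
     is_MAW (substr T i j.+1) w /\ ~ is_MAW (substr T i j) w) ->
  size ws <= num_distinct (substr T i j) + (j - i + 1).
Proof.
move=> h1 h2 h3 ws U H.
have [t0 _] : exists t0 : Sigma, True by move: h3; case: (T) => [|t ?] //; exists t.
have Hsz : size (substr T i j) = j - i + 1.
  rewrite /substr size_take size_drop; case: ltnP; lia.
have Hr : substr T i j.+1 = rcons (substr T i j) (nth t0 (drop i.-1 T) (j.+1 - i)).
  rewrite /substr -take_nth; last by rewrite size_drop; lia.
  congr take; lia.
rewrite /num_distinct -Hsz.
apply: (count_main (c := nth t0 (drop i.-1 T) (j.+1 - i))) => //.
  by rewrite Hsz; lia.
by move=> w /H; rewrite Hr.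
Qed.
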